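(* Let $\langle\mathcal{D},\sigma,\varphi\rangle$ be a hybrid temporal achievement causal setting. Then $$\mathcal{D}\models \mathit{CausesDir}^{\mathit{prim}}_{\mathit{temp}}(a_1,ts_1,\varphi,\sigma)\land\mathit{CausesDir}^{\mathit{prim}}_{\mathit{temp}}(a_2,ts_2,\varphi,\sigma)\supset a_1=a_2\land ts_1=ts_2$$ (free variables universally quantified).
   Context: Hybrid temporal situation calculus (HTSC): $S_0$ initial situation, $do(a,s)$ successor situation, $do([a_1,\dots,a_n],s)$ the nesting. $s\sqsubset s'$: $s'$ reachable from $s$ by one or more actions; $s\sqsubseteq s'$: $s\sqsubset s'\lor s=s'$. $\mathit{time}(a(\vec x,t))=t$, $\mathit{start}(do(a,s))=\mathit{time}(a)$. $\mathit{Exec}(s)\doteq\forall a,s'.(do(a,s')\sqsubseteq s\supset\mathit{Poss}(a,s')\land\mathit{start}(s')\le\mathit{time}(a))$; $s<s'$ abbreviates $s\sqsubset s'\land\mathit{Exec}(s')$; $s\le s'$ abbreviates $s<s'\lor s=s'$. $\mathit{timeStamp}(S_0)=0$, $\mathit{timeStamp}(do(a,s))=\mathit{timeStamp}(s)+1$. A hybrid basic action theory $\mathcal{D}$ contains initial-state, precondition, successor-state (discrete fluents), state evolution (temporal fluents), unique-names and foundational axioms. A temporal fluent $f$ has state evolution axiom $f(\vec x,t,s)=y\equiv[\bigvee_i(\gamma^f_i(\vec x,s)\land\delta_i(\vec x,y,t,s))\lor(y=f(\vec x,\mathit{start}(s),s)\land\neg\bigvee_i\gamma^f_i(\vec x,s))]$,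 where the contexts $\gamma_i^f$ are formulas over discrete fluents and are mutually exclusive (at most one holds in any situation). An effect $\varphi$ is a situation- and time-suppressed formula, uniform in the situation, constraining the value of one primitive temporal fluent $f$; $\varphi[t,s]$ restores time $t$ and situation $s$; for a situation-suppressed $\psi$, $\psi[s]$ restores $s$. $\mathit{CausesDir}(a,ts,\psi,s)\doteq\exists s_a.\,\mathit{timeStamp}(s_a)=ts\land(S_0<do(a,s_a)\le s)\land\neg\psi[s_a]\land\forall s'.(do(a,s_a)\le s'\le s\supset\psi[s'])$. $\mathit{end}(s',s)=\mathit{start}(s')$ if $s'=s$; $=\mathit{time}(a)$ if $do(a,s')\le s$. $\mathit{AchvSitAux}(s_\varphi,\varphi,s)\doteq\varphi[\mathit{end}(s_\varphi,s),s_\varphi]\land\forall s',t.(s_\varphi<s'\le s\land\mathit{start}(s')\le t\le\mathit{end}(s',s)\supset\varphi[t,s'])$; $\mathit{AchvSit}(s_\varphi,\varphi,s)\doteq\mathit{AchvSitAux}(s_\varphi,\varphi,s)\land\neg\exists s''.(s''<s_\varphi\land\mathit{AchvSitAux}(s'',\varphi,s))$. $\mathit{CausesDir}^{\mathit{prim}}_{\mathit{temp}}(a,ts,\varphi,s)\doteq\exists s_\varphi.\,\mathit{AchvSit}(s_\varphi,\varphi,s)\land\exists i.\,\mathit{CausesDir}(a,ts,\gamma^f_i,s_\varphi)$, where $f$ is the fluent in $\varphi$. Hybrid temporal achievement causal setting $\langle\mathcal{D},\sigma,\varphi\rangle$: $\sigma=do([\alpha_1,\dots,\alpha_n],S_0)$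 ground, $n\ge1$, and $\mathcal{D}\models\mathit{Exec}(\sigma)\land\neg\varphi[\mathit{start}(S_0),S_0]\land\neg\varphi[\mathit{time}(\alpha_1),S_0]\land\varphi[\mathit{start}(\sigma),\sigma]$. *)

(* Defs.v *)
(* Situations are interpreted in the (standard, up to isomorphism) model of the
   foundational axioms: finite sequences of actions, S0 = nil, do(a,s) = a :: s. *)
From Stdlib Require Import Reals List.
Open Scope R_scope.
Set Implicit Arguments.

Section HTSC.
Variable Act : Type.
Variable time : Act -> R.
Variable Poss : Act -> list Act -> Prop.
Variable start0 : R.

Definition Sit := list Act.
Definition S0 : Sit := nil.
Definition do_ (a : Act) (s : Sit) : Sit := a :: s.
(* do([a1,...,an], s) = do(an, ... do(a1, s)) *)
Definition do_seq (l : list Act) (s : Sit) : Sit :=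
  fold_left (fun s a => do_ a s) l s.

Definition start (s : Sit) : R :=
  match s with nil => start0 | a :: _ => time a end.
Definition timeStamp (s : Sit) : nat := length s.

Definition sqsub (s s' : Sit) : Prop := exists l, l <> nil /\ s' = l ++ s.
Definition sqsubeq (s s' : Sit) : Prop := sqsub s s' \/ s = s'.

Definition Exec (s : Sit) : Prop :=
  forall a s', sqsubeq (do_ a s') s -> Poss a s' /\ start s' <= time a.

Definition slt (s s' : Sit) : Prop := sqsub s s' /\ Exec s'.
Definition sle (s s' : Sit) : Prop := slt s s' \/ s = s'.

Definition CausesDir (a : Act) (ts : nat) (psi : Sit -> Prop) (s : Sit) : Prop :=
  exists sa, timeStamp sa = ts /\
    (slt S0 (do_ a sa) /\ sle (do_ a sa) s) /\
    ~ psi sa /\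
    (forall s', sle (do_ a sa) s' /\ sle s' s -> psi s').

(* end(s',s) = t, as a (partial, functional) relation:
   end(s',s) = start(s') if s' = s;  = time(a) if do(a,s') <= s. *)
Definition EndIs (s' s : Sit) (t : R) : Prop :=
  (s' = s /\ t = start s') \/ (exists a, sle (do_ a s') s /\ t = time a).

Definition AchvSitAux (sphi : Sit) (phi : R -> Sit -> Prop) (s : Sit) : Prop :=
  (exists e, EndIs sphi s e /\ phi e sphi) /\
  (forall s' t, slt sphi s' /\ sle s' s ->
     (exists e, EndIs s' s e /\ start s' <= t /\ t <= e) -> phi t s').

Definition AchvSit (sphi : Sit) (phi : R -> Sit -> Prop) (s : Sit) : Prop :=
  AchvSitAux sphi phi s /\ ~ (exists s'', slt s'' sphi /\ AchvSitAux s'' phi s).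

(* gamma i : the i-th context of the state evolution axiom of the fluent
   mentioned in phi (instantiated at the fluent's arguments). *)
Definition CausesDirPrimTemp (I : Type) (gamma : I -> Sit -> Prop)
  (a : Act) (ts : nat) (phi : R -> Sit -> Prop) (s : Sit) : Prop :=
  exists sphi, AchvSit sphi phi s /\ exists i, CausesDir a ts (gamma i) sphi.
End HTSC.

Definition StateEvolution (Act X V I : Type) (start : list Act -> R)
  (f : X -> R -> list Act -> V) (gamma : I -> X -> list Act -> Prop)
  (delta : I -> X -> V -> R -> list Act -> Prop) : Prop :=
  forall x t s y,
    f x t s = y <->
    ((exists i, gamma i x s /\ delta i x y t s) \/
     (y = f x (start s) s /\ ~ (exists i, gamma i x s))).

Definition MutuallyExclusive (Act X I : Type) (gamma : I -> X -> list Act -> Prop) : Prop :=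
  forall i j x s, gamma i x s -> gamma j x s -> i = j.

(* An effect constraining the value of the primitive temporal fluent f
   (at ground arguments x0): phi[t,s] := P(f(x0,t,s)). *)
Definition effect (Act X V : Type) (f : X -> R -> list Act -> V) (x0 : X)
  (P : V -> Prop) : R -> list Act -> Prop :=
  fun t s => P (f x0 t s).

(* Main.v *)
Require Import Defs.
From Stdlib Require Import Reals List Lia Classical.
Open Scope R_scope.

Definition suf {A : Type} (s t : list A) : Prop := exists l, t = l ++ s.

Lemma suf_refl {A} (s : list A) : suf s s.
Proof. exists nil; reflexivity. Qed.

Lemma suf_trans {A} (s t u : list A) : suf s t -> suf t u -> suf s u.
Proof. intros [l1 ->] [l2 ->]. exists (l2 ++ l1). now rewrite app_assoc. Qed.

Lemma suf_cons {A} (a : A) s t : suf (a :: s) t -> suf s t.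
Proof. intros [l ->]. exists (l ++ a :: nil). now rewrite <- app_assoc. Qed.

Lemma suf_len {A} (s t : list A) : suf s t -> (length s <= length t)%nat.
Proof. intros [l ->]. rewrite length_app. lia. Qed.

Lemma suf_eq {A} (s t : list A) : suf s t -> length s = length t -> s = t.
Proof. intros [l ->] H. rewrite length_app in H. destruct l; simpl in *; auto; lia. Qed.

Lemma suf_total {A} (s1 s2 t : list A) : suf s1 t -> suf s2 t -> suf s1 s2 \/ suf s2 s1.
Proof.
  intros [l1 H1] [l2 H2]. rewrite H1 in H2.
  apply app_eq_app in H2. destruct H2 as [l [[_ E]|[_ E]]].
  - left. exists l. auto.
  - right. exists l. auto.
Qed.

Lemma sqsubeq_suf {A} (s t : list A) : sqsubeq s t -> suf s t.
Proof. intros [[l [_ ->]]| ->]. exists l; auto. apply suf_refl. Qed.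

Lemma suf_sqsub {A} (s t : list A) : suf s t -> s <> t -> sqsub s t.
Proof. intros [l ->] H. exists l. split; auto. intros ->. apply H; reflexivity. Qed.

Lemma sle_suf {A} time Poss start0 (s t : list A) : sle time Poss start0 s t -> suf s t.
Proof. intros [[H _]| ->]. apply sqsubeq_suf. now left. apply suf_refl. Qed.

Lemma suf_sqsubeq {A} (s t : list A) : suf s t -> sqsubeq s t.
Proof.
  intros [l ->]. destruct l as [|x l]. right; reflexivity.
  left. exists (x :: l). split; auto. discriminate.
Qed.

Lemma Exec_down {A} time Poss start0 (s t : list A) :
  Exec time Poss start0 t -> suf s t -> Exec time Poss start0 s.
Proof.
  intros HE Hs a s' H. apply HE. apply suf_sqsubeq.
  apply sqsubeq_suf in H. eapply suf_trans; eauto.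
Qed.

Lemma achv_suf {A} time Poss start0 sp phi (s : list A) :
  AchvSitAux time Poss start0 sp phi s -> suf sp s.
Proof.
  intros [[e [[[-> _]|[a [H _]]] _]] _]. apply suf_refl.
  apply sle_suf in H. eapply suf_cons; eauto.
Qed.

Lemma achv_uniq {A} time Poss start0 sp1 sp2 phi (s : list A) :
  Exec time Poss start0 s ->
  AchvSit time Poss start0 sp1 phi s -> AchvSit time Poss start0 sp2 phi s -> sp1 = sp2.
Proof.
  intros HE [Q1 N1] [Q2 N2].
  assert (S1 : suf sp1 s) by (eapply achv_suf; eauto). assert (S2 : suf sp2 s) by (eapply achv_suf; eauto).
  destruct (suf_total _ _ _ S1 S2) as [H|H].
  - destruct (classic (sp1 = sp2)) as [e|n]. exact e. exfalso.
    apply N2. exists sp1. split; auto. split. apply suf_sqsub; auto.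
    eapply Exec_down; eauto.
  - destruct (classic (sp2 = sp1)) as [e|n]. auto. exfalso.
    apply N1. exists sp2. split; auto. split. apply suf_sqsub; auto.
    eapply Exec_down; eauto.
Qed.

Lemma cd_key {A} time Poss start0 (sp : list A) a sa b sb :
  Exec time Poss start0 sp -> suf (a :: sa) sp -> suf (b :: sb) sp ->
  (length sa < length sb)%nat ->
  sle time Poss start0 (a :: sa) sb /\ sle time Poss start0 sb sp.
Proof.
  intros HE Ha Hb Hl.
  assert (Hsb : suf sb sp) by (eapply suf_cons; eauto).
  split.
  - destruct (suf_total _ _ _ Ha Hsb) as [H|H].
    + destruct (classic ((a :: sa) = sb)) as [e|n]. now right.
      left. split. apply suf_sqsub; auto. eapply Exec_down; eauto.
    + right. symmetry. apply suf_eq; auto. apply suf_len in H. simpl in *. lia.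
  - left. split; [|exact HE]. apply suf_sqsub; [exact Hsb|]. intros ->.
    apply suf_len in Hb. simpl in Hb. lia.
Qed.

Lemma cd_uniq {A} time Poss start0 (sp : list A) a ts b ts' psi :
  Exec time Poss start0 sp ->
  CausesDir time Poss start0 a ts psi sp -> CausesDir time Poss start0 b ts' psi sp ->
  a = b /\ ts = ts'.
Proof.
  intros HE [sa [Ta [[_ La] [Na Fa]]]] [sb [Tb [[_ Lb] [Nb Fb]]]].
  unfold timeStamp, do_ in *.
  apply sle_suf in La. apply sle_suf in Lb.
  assert (Hlen : length sa = length sb).
  { destruct (Nat.lt_trichotomy (length sa) (length sb)) as [H|[H|H]]; auto.
    - exfalso. apply Nb. apply Fa. eapply cd_key; eauto.
    - exfalso. apply Na. apply Fb. eapply cd_key; eauto. }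
  assert (sa = sb).
  { destruct (suf_total _ _ _ (suf_cons _ _ _ La) (suf_cons _ _ _ Lb)) as [H|H];
      [apply suf_eq| symmetry; apply suf_eq]; auto. }
  subst sb. split; [|congruence].
  destruct (suf_total _ _ _ La Lb) as [H|H];
    [apply suf_eq in H | apply suf_eq in H]; simpl; try congruence.
Qed.

Theorem theorem5p3
  (Act : Type) (time : Act -> R) (Poss : Act -> list Act -> Prop) (start0 : R)
  (X V I : Type) (f : X -> R -> list Act -> V)
  (gamma : I -> X -> list Act -> Prop)
  (delta : I -> X -> V -> R -> list Act -> Prop)
  (x0 : X) (P : V -> Prop)
  (alpha1 : Act) (alphas : list Act) :
  StateEvolution (start time start0) f gamma delta ->
  MutuallyExclusive gamma ->
  let phi := effect f x0 P in
  let sigma := do_seq (alpha1 :: alphas) (S0 Act) in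
  (* the hybrid temporal achievement causal setting conditions *)
  Exec time Poss start0 sigma ->
  ~ phi (start time start0 (S0 Act)) (S0 Act) ->
  ~ phi (time alpha1) (S0 Act) ->
  phi (start time start0 sigma) sigma ->
  forall (a1 a2 : Act) (ts1 ts2 : nat),
    CausesDirPrimTemp time Poss start0 (fun i s => gamma i x0 s) a1 ts1 phi sigma ->
    CausesDirPrimTemp time Poss start0 (fun i s => gamma i x0 s) a2 ts2 phi sigma ->
    a1 = a2 /\ ts1 = ts2.
Proof.
  intros _ HME phi sigma HE _ _ _ a1 a2 ts1 ts2
    [sp1 [H1 [i C1]]] [sp2 [H2 [j C2]]].
  assert (E : sp1 = sp2) by (eapply achv_uniq; eauto). subst sp2.
  assert (Hs : Exec time Poss start0 sp1).
  { eapply Exec_down; eauto. destruct H1 as [Q _]. eapply achv_suf; eauto. }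
  assert (gi : gamma i x0 sp1).
  { destruct C1 as [sa [_ [[_ L] [_ F]]]]. apply F. split; auto. now right. }
  assert (gj : gamma j x0 sp1).
  { destruct C2 as [sa [_ [[_ L] [_ F]]]]. apply F. split; auto. now right. }
  pose proof (HME _ _ _ _ gi gj). subst j.
  eapply cd_uniq; eauto.
Qed.
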